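(* Assume the setting and hypotheses below, including $L>1$, and suppose $D_M(t)=kD(t)$ with $k>0$ and $D$ a positive continuous $T$-periodic function. Let $c^*(k)=\inf_{\mu>0}\frac1\mu\ln\int_{\mathbb{R}}e^{\mu y}\mathcal{K}(y)dy$ be the spreading speed with this $D_M$. Then $$\lim_{k\to+\infty}\frac{c^*(k)}{\sqrt k}=\inf_{\mu>0}H(\mu,+\infty)\in(0,+\infty),$$ where $$H(\mu,+\infty)=\frac1\mu\ln\Big(e^{\mu^2\int_0^TD(s)ds-\int_0^Td_M(s)ds}+\int_{t_\alpha}^{t_\beta}\partial_\varphi R(s,0)\,e^{-\left(\int_0^{s-\tau(s)}+\int_s^T\right)d_M(\omega)d\omega}\,e^{\mu^2\left(\int_0^{s-\tau(s)}+\int_s^T\right)D(\omega)d\omega}ds\Big).$$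
   Context: Setting. $T>0$; $D_I\ge0$, $d_M,d_I>0$, $\tau>0$, $p\ge0$ are $C^1$ $T$-periodic functions; $h\in C^1([0,\infty);[0,\infty))$; $0<\alpha\le\beta<t_\alpha\le t_\beta<T$ with $t_\alpha-\tau(t_\alpha)=\alpha$, $t_\beta-\tau(t_\beta)=\beta$, $p=0$ on $[0,\alpha]\cup[\beta,T]$; $\tau'<1$; $h(0)=0$, $h(z)\to0$ as $z\to\infty$, $h$ unimodal (increasing then decreasing); $h(\lambda z)\ge\lambda h(z)$ for $\lambda\in(0,1)$. Notation: $\partial_\varphi R(s,0)=(1-\tau'(s))e^{-\int_{s-\tau(s)}^sd_I}p(s-\tau(s))h'(0)$, $\sigma(s)=\int_{s-\tau(s)}^sD_I$, $\overline{k}_M(t,s)=e^{-\int_s^td_M}$, $L=\frac{\overline{k}_M(T,0)}{1-\overline{k}_M(T,0)}\int_{t_\alpha}^{t_\beta}\frac{\partial_\varphi R(s,0)}{\overline{k}_M(s,s-\tau(s))}ds$. The quantity $\int e^{\mu y}\mathcal{K}(y)dy$ equals $e^{\int_0^T[\mu^2D_M-d_M]}+\int_{t_\alpha}^{t_\beta}\partial_\varphi R(s,0)e^{(\int_s^T+\int_0^{s-\tau(s)})[\mu^2D_M(\varsigma)-d_M(\varsigma)]d\varsigma+\mu^2\sigma(s)}ds$. *)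

(* Defs.v *)
From Stdlib Require Import Reals Lra.
From Coquelicot Require Import Coquelicot.
Open Scope R_scope.

Definition periodic (T : R) (f : R -> R) : Prop := forall t, f (t + T) = f t.

Definition is_C1 (f : R -> R) : Prop :=
  forall t, ex_derive f t /\ continuous (Derive f) t.

Definition kM (dM : R -> R) (t s : R) : R := exp (- RInt dM s t).

(* partial_phi R(s,0) = (1-tau'(s)) e^{-int_{s-tau(s)}^s d_I} p(s-tau(s)) h'(0) *)
Definition dRphi (tau dI p : R -> R) (hp0 : R) (s : R) : R :=
  (1 - Derive tau s) * exp (- RInt dI (s - tau s) s) * p (s - tau s) * hp0.

Definition sigma (DI tau : R -> R) (s : R) : R := RInt DI (s - tau s) s.

Definition Lval (T : R) (dM tau dI p : R -> R) (hp0 ta tb : R) : R :=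
  kM dM T 0 / (1 - kM dM T 0) *
  RInt (fun s => dRphi tau dI p hp0 s / kM dM s (s - tau s)) ta tb.

(* int e^{mu y} K(y) dy, for a given diffusion coefficient D_M *)
Definition Kint (T : R) (DM dM DI tau dI p : R -> R) (hp0 ta tb mu : R) : R :=
  let g := fun v => mu ^ 2 * DM v - dM v in
  exp (RInt g 0 T) +
  RInt (fun s => dRphi tau dI p hp0 s *
                 exp (RInt g s T + RInt g 0 (s - tau s) + mu ^ 2 * sigma DI tau s))
       ta tb.

Definition cstar (T : R) (DM dM DI tau dI p : R -> R) (hp0 ta tb : R) : Rbar :=
  Glb_Rbar (fun c => exists mu, 0 < mu /\
              c = / mu * ln (Kint T DM dM DI tau dI p hp0 ta tb mu)).

Definition Hinf (T : R) (D dM tau dI p : R -> R) (hp0 ta tb mu : R) : R :=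
  / mu * ln (exp (mu ^ 2 * RInt D 0 T - RInt dM 0 T) +
             RInt (fun s => dRphi tau dI p hp0 s *
                            exp (- (RInt dM 0 (s - tau s) + RInt dM s T)) *
                            exp (mu ^ 2 * (RInt D 0 (s - tau s) + RInt D s T)))
                  ta tb).

Definition Hinf_inf (T : R) (D dM tau dI p : R -> R) (hp0 ta tb : R) : Rbar :=
  Glb_Rbar (fun c => exists mu, 0 < mu /\ c = Hinf T D dM tau dI p hp0 ta tb mu).

(* Main.v *)
Require Import Defs.
From Stdlib Require Import Reals Lra Classical.
From Coquelicot Require Import Coquelicot.
Open Scope R_scope.


Lemma exple x y : x <= y -> exp x <= exp y.
Proof. intros [H|H]. left; apply exp_increasing; auto. subst; lra. Qed.
Lemma lnle x y : 0 < x -> x <= y -> ln x <= ln y.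
Proof. intros H [H'|H']. left; apply ln_increasing; auto. subst; lra. Qed.

Lemma c_exRInt (f : R -> R) : (forall x, continuous f x) -> forall a b, ex_RInt f a b.
Proof. intros Hf a b; apply (ex_RInt_continuous (V:=R_CompleteNormedModule)); intros; apply Hf. Qed.

Lemma RInt_prim (f : R -> R) : (forall x, continuous f x) ->
  forall a b, RInt f a b = RInt f 0 b - RInt f 0 a.
Proof.
  intros Hf a b.
  pose proof (RInt_Chasles f 0 a b (c_exRInt f Hf 0 a) (c_exRInt f Hf a b)) as H.
  change (plus (RInt f 0 a) (RInt f a b)) with (RInt f 0 a + RInt f a b) in H.
  lra.
Qed.

Lemma cont_prim (f : R -> R) : (forall x, continuous f x) ->
  forall x, continuous (fun y => RInt f 0 y) x.
Proof.
  intros Hf x. apply (ex_derive_continuous (K:=R_AbsRing) (V:=R_NormedModule)). exists (f x).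
  apply (is_derive_RInt f (fun y => RInt f 0 y) 0 x).
  - apply filter_forall. intros y. apply (RInt_correct (V:=R_CompleteNormedModule)). apply c_exRInt; auto.
  - apply Hf.
Qed.

Lemma cmult (f g : R -> R) x : continuous f x -> continuous g x ->
  continuous (fun y => f y * g y) x.
Proof. intros; apply (continuous_mult f g); auto. Qed.
Lemma cplus (f g : R -> R) x : continuous f x -> continuous g x ->
  continuous (fun y => f y + g y) x.
Proof. intros; apply (continuous_plus f g); auto. Qed.
Lemma cminus (f g : R -> R) x : continuous f x -> continuous g x ->
  continuous (fun y => f y - g y) x.
Proof. intros; apply (continuous_minus f g); auto. Qed.
Lemma copp (f : R -> R) x : continuous f x -> continuous (fun y => - f y) x.
Proof. intros; apply (continuous_opp f); auto. Qed.
Lemma cexp (f : R -> R) x : continuous f x -> continuous (fun y => exp (f y)) x.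
Proof. intros; apply (continuous_comp f exp); auto. apply (ex_derive_continuous (K:=R_AbsRing) (V:=R_NormedModule)). auto_derive. auto. Qed.
Lemma ccomp (f g : R -> R) : (forall x, continuous f x) -> (forall x, continuous g x) ->
  forall x, continuous (fun y => g (f y)) x.
Proof. intros; apply (continuous_comp f g); auto. Qed.

Lemma cont_RInt_gen (f a b : R -> R) : (forall x, continuous f x) ->
  (forall x, continuous a x) -> (forall x, continuous b x) ->
  forall x, continuous (fun s => RInt f (a s) (b s)) x.
Proof.
  intros Hf Ha Hb x.
  apply (continuous_ext (fun s => RInt f 0 (b s) - RInt f 0 (a s))).
  { intros; rewrite (RInt_prim f Hf (a x0) (b x0)); reflexivity. }
  apply cminus; apply (continuous_comp _ (fun y => RInt f 0 y)); auto; apply cont_prim; auto.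
Qed.

Lemma RInt_scalR (f : R -> R) a b l : ex_RInt f a b ->
  RInt (fun x => l * f x) a b = l * RInt f a b.
Proof. intros H; exact (RInt_scal f a b l H). Qed.

Lemma RInt_lin (f g : R -> R) c a b : (forall x, continuous f x) -> (forall x, continuous g x) ->
  RInt (fun v => c * f v - g v) a b = c * RInt f a b - RInt g a b.
Proof.
  intros Hf Hg.
  rewrite <- RInt_scalR by (apply c_exRInt; auto).
  pose proof (RInt_minus (fun v => c * f v) g a b) as H.
  change (minus ?x ?y) with (x - y) in H. rewrite <- H. reflexivity.
  apply (ex_RInt_scal f a b c). apply c_exRInt; auto.
  apply c_exRInt; auto.
Qed.

Lemma int_bounds (f g : R -> R) a b c S : a <= b -> (forall x, continuous f x) ->
  (forall x, continuous g x) -> (forall x, 0 <= f x) ->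
  (forall x, a <= x <= b -> 0 <= g x <= S) -> 0 <= c ->
  RInt f a b <= RInt (fun s => f s * exp (c * g s)) a b <= exp (c * S) * RInt f a b.
Proof.
  intros Hab Hf Hg Hf0 HgS Hc.
  assert (Hc1 : forall x, continuous (fun s => f s * exp (c * g s)) x).
  { intros x; apply cmult; auto. apply cexp. apply cmult; auto. apply continuous_const. }
  split.
  - apply RInt_le; auto; try (apply c_exRInt; auto).
    intros x Hx. specialize (HgS x ltac:(lra)). specialize (Hf0 x).
    assert (1 <= exp (c * g x)).
    { rewrite <- exp_0. apply exple. apply Rmult_le_pos; lra. }
    nra.
  - rewrite <- RInt_scalR by (apply c_exRInt; auto).
    apply RInt_le; auto; try (apply c_exRInt; auto).
    + intros x; apply cmult; auto; apply continuous_const.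
    + intros x Hx. specialize (HgS x ltac:(lra)). specialize (Hf0 x).
      assert (exp (c * g x) <= exp (c * S)).
      { apply exple. apply Rmult_le_compat_l; lra. }
      nra.
Qed.

Lemma glb_fin (E : R -> Prop) c x0 : E x0 -> (forall x, E x -> c <= x) ->
  exists l, Glb_Rbar E = Finite l /\ c <= l /\ (forall x, E x -> l <= x) /\
    (forall eps, 0 < eps -> exists x, E x /\ x < l + eps).
Proof.
  intros H0 Hc. destruct (Glb_Rbar_correct E) as [lb glb].
  destruct (Glb_Rbar E) as [l| |] eqn:Hg.
  - exists l. split; auto. split.
    + apply (glb c). intros x Hx; simpl; auto.
    + split. intros x Hx; apply (lb x Hx).
      intros eps Heps. destruct (classic (exists x, E x /\ x < l + eps)) as [H|H]; auto.
      exfalso. assert (Rbar_le (l+eps) l). apply glb. intros x Hx. simpl.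
      destruct (Rle_lt_dec (l+eps) x); auto. exfalso; apply H; eauto.
      simpl in H1; lra.
  - specialize (lb x0 H0). simpl in lb. contradiction.
  - assert (Rbar_le c m_infty). apply glb. intros x Hx; simpl; auto. simpl in H; contradiction.
Qed.

Definition Einf (T : R) (D dM tau dI p : R -> R) (hp0 nu s : R) : R :=
  dRphi tau dI p hp0 s * exp (- (RInt dM 0 (s - tau s) + RInt dM s T)) *
  exp (nu ^ 2 * (RInt D 0 (s - tau s) + RInt D s T)).

Lemma C1cont f : is_C1 f -> forall x, continuous f x.
Proof. intros H x. apply (ex_derive_continuous (K:=R_AbsRing) (V:=R_NormedModule)). apply H. Qed.

Theorem proposition4p6
  (T : R) (DI dM dI tau p : R -> R) (h : R -> R) (hp0 : R)
  (alpha beta ta tb : R) (D : R -> R)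
  (* periodic C^1 coefficients *)
  (HT : 0 < T)
  (HDI : is_C1 DI /\ periodic T DI /\ forall t, 0 <= DI t)
  (HdM : is_C1 dM /\ periodic T dM /\ forall t, 0 < dM t)
  (HdI : is_C1 dI /\ periodic T dI /\ forall t, 0 < dI t)
  (Htau : is_C1 tau /\ periodic T tau /\ forall t, 0 < tau t)
  (Hp : is_C1 p /\ periodic T p /\ forall t, 0 <= p t)
  (Htau' : forall t, Derive tau t < 1)
  (* h in C^1([0,oo);[0,oo)); hp0 = h'(0) (right derivative) *)
  (Hh_nonneg : forall z, 0 <= z -> 0 <= h z)
  (Hh_C1 : forall z, 0 < z -> ex_derive h z /\ continuous (Derive h) z)
  (Hh_cont0 : filterlim h (at_right 0) (locally (h 0)))
  (Hh_der0 : filterlim (fun z => (h z - h 0) / z) (at_right 0) (locally hp0))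
  (Hh_derc0 : filterlim (Derive h) (at_right 0) (locally hp0))
  (Hh0 : h 0 = 0)
  (Hhinf : is_lim h p_infty 0)
  (Hh_unimodal : exists z0, 0 <= z0 /\
      (forall x y, 0 <= x -> x <= y -> y <= z0 -> h x <= h y) /\
      (forall x y, z0 <= x -> x <= y -> h y <= h x))
  (Hh_sub : forall lam z, 0 < lam < 1 -> 0 <= z -> lam * h z <= h (lam * z))
  (* the time window of reproduction *)
  (Hord : 0 < alpha /\ alpha <= beta /\ beta < ta /\ ta <= tb /\ tb < T)
  (Hta : ta - tau ta = alpha) (Htb : tb - tau tb = beta)
  (Hp0 : forall t, (0 <= t <= alpha \/ beta <= t <= T) -> p t = 0)
  (HL : Lval T dM tau dI p hp0 ta tb > 1)
  (* D_M = k D with D positive continuous T-periodic *)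
  (HD : (forall t, continuous D t) /\ periodic T D /\ forall t, 0 < D t) :
  exists l : R,
    0 < l /\
    Hinf_inf T D dM tau dI p hp0 ta tb = Finite l /\
    (exists K0, forall k, K0 < k ->
        is_finite (cstar T (fun t => k * D t) dM DI tau dI p hp0 ta tb)) /\
    is_lim (fun k => real (cstar T (fun t => k * D t) dM DI tau dI p hp0 ta tb) / sqrt k)
           p_infty l.

Proof.
  destruct HDI as [DIC1 [_ DI0]]. destruct HdM as [dMC1 [_ dM0]].
  destruct HdI as [dIC1 [_ dI0]]. destruct Htau as [tauC1 [_ tau0]].
  destruct Hp as [pC1 [_ p0]]. destruct HD as [cD [_ D0]].
  destruct Hord as [Hal [Hab [Hbt [Htt HtbT]]]].
  pose proof (C1cont _ DIC1) as cDI. pose proof (C1cont _ dMC1) as cdM.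
  pose proof (C1cont _ dIC1) as cdI. pose proof (C1cont _ tauC1) as ctau.
  pose proof (C1cont _ pC1) as cp.
  assert (cDtau : forall x, continuous (Derive tau) x) by (intros; apply tauC1).
  assert (hp0pos : 0 <= hp0).
  { destruct (Rle_lt_dec 0 hp0) as [hh|hh]; auto. exfalso.
    assert (Hloc : locally hp0 (fun y => y < 0)).
    { exists (mkposreal (-hp0/2) ltac:(lra)). intros y Hy.
      change (Rabs (y - hp0) < -hp0/2) in Hy.
      apply Rabs_lt_between in Hy. lra. }
    specialize (Hh_der0 _ Hloc). destruct Hh_der0 as [d Hd].
    assert (Hdp := cond_pos d).
    assert (Hz : ball 0 d (d/2)).
    { change (Rabs (d/2 - 0) < d). rewrite Rabs_right; lra. }
    specialize (Hd (d/2) Hz ltac:(lra)). simpl in Hd.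
    rewrite Hh0 in Hd. assert (0 <= h (d/2)) by (apply Hh_nonneg; lra).
    assert (0 <= (h (d/2) - 0) / (d/2)).
    { unfold Rdiv. apply Rmult_le_pos. lra. left; apply Rinv_0_lt_compat; lra. }
    lra. }
  assert (cu : forall x, continuous (fun s => s - tau s) x).
  { intros; apply cminus; auto. apply continuous_id. }
  assert (cdR : forall x, continuous (dRphi tau dI p hp0) x).
  { intros x. unfold dRphi. apply cmult; [|apply continuous_const].
    apply cmult; [|apply (ccomp (fun s => s - tau s) p); auto].
    apply cmult. apply cminus; auto; apply continuous_const.
    apply cexp. apply copp. apply (cont_RInt_gen dI (fun s => s - tau s) (fun s => s)); auto.
    intros; apply continuous_id. }
  assert (dR0 : forall s, 0 <= dRphi tau dI p hp0 s).
  { intros s. unfold dRphi. specialize (Htau' s). specialize (p0 (s - tau s)).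
    assert (0 < exp (- RInt dI (s - tau s) s)) by apply exp_pos.
    apply Rmult_le_pos; auto. apply Rmult_le_pos; auto. apply Rmult_le_pos; lra. }
  assert (cE : forall nu x, continuous (Einf T D dM tau dI p hp0 nu) x).
  { intros nu x. unfold Einf. apply cmult; [apply cmult|]; auto.
    - apply cexp. apply copp. apply cplus.
      apply (cont_RInt_gen dM (fun _ => 0) (fun s => s - tau s)); auto. intros; apply continuous_const.
      apply (cont_RInt_gen dM (fun s => s) (fun _ => T)); auto. intros; apply continuous_id. intros; apply continuous_const.
    - apply cexp. apply cmult. apply continuous_const. apply cplus.
      apply (cont_RInt_gen D (fun _ => 0) (fun s => s - tau s)); auto. intros; apply continuous_const.
      apply (cont_RInt_gen D (fun s => s) (fun _ => T)); auto. intros; apply continuous_id. intros; apply continuous_const. }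
  assert (E0 : forall nu s, 0 <= Einf T D dM tau dI p hp0 nu s).
  { intros nu s. unfold Einf. apply Rmult_le_pos. apply Rmult_le_pos; auto.
    left; apply exp_pos. left; apply exp_pos. }
  assert (csig : forall x, continuous (Defs.sigma DI tau) x).
  { intros x. unfold Defs.sigma. apply (cont_RInt_gen DI (fun s => s - tau s) (fun s => s)); auto.
    intros; apply continuous_id. }
  assert (sig0 : forall s, 0 <= Defs.sigma DI tau s).
  { intros s. unfold Defs.sigma. apply RInt_ge_0. specialize (tau0 s); lra.
    apply c_exRInt; auto. intros; auto. }
  destruct (continuity_ab_maj (Defs.sigma DI tau) ta tb Htt) as [Mx [HMx _]].
  { intros; apply continuity_pt_filterlim; apply csig. }
  set (S := Defs.sigma DI tau Mx) in *.
  assert (S0 : 0 <= S) by apply sig0.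
  assert (uge : forall s, ta <= s <= tb -> alpha <= s - tau s).
  { intros s [H1 H2]. destruct H1 as [H1|H1]; [|subst; lra].
    assert (ta - tau ta < s - tau s); [|lra].
    apply (incr_function (fun s => s - tau s) m_infty p_infty (fun x => 1 - Derive tau x)); simpl; auto.
    intros x _ _. auto_derive. apply tauC1. replace (Derive (fun x => tau x) x) with (Derive tau x) by reflexivity; ring.
    intros x _ _. specialize (Htau' x). lra. }
  assert (Apos : 0 < RInt D 0 T).
  { destruct (continuity_ab_min D 0 T ltac:(lra)) as [mx [Hmx _]].
    { intros; apply continuity_pt_filterlim; apply cD. }
    assert (RInt (fun _ => D mx) 0 T <= RInt D 0 T).
    { apply RInt_le. lra. apply c_exRInt; intros; apply continuous_const.
      apply c_exRInt; auto. intros x Hx; apply Hmx; lra. }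
    rewrite RInt_const in H. change (scal (T - 0) (D mx)) with ((T - 0) * D mx) in H.
    specialize (D0 mx). nra. }
  assert (B0 : 0 <= RInt dM 0 T).
  { apply RInt_ge_0. lra. apply c_exRInt; auto. intros; left; auto. }
  set (A := RInt D 0 T) in *. set (B := RInt dM 0 T) in *.
  set (Kinf := fun nu => exp (nu ^ 2 * A - B) + RInt (Einf T D dM tau dI p hp0 nu) ta tb).
  assert (HinfE : forall nu, Hinf T D dM tau dI p hp0 ta tb nu = / nu * ln (Kinf nu)).
  { intros; reflexivity. }
  assert (Kexp : forall nu, exp (nu ^ 2 * A - B) <= Kinf nu).
  { intros nu. unfold Kinf. assert (0 <= RInt (Einf T D dM tau dI p hp0 nu) ta tb); [|lra].
    apply RInt_ge_0; auto. apply c_exRInt; auto. }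
  assert (Kmono : forall nu, Kinf 0 <= Kinf nu).
  { intros nu. unfold Kinf. apply Rplus_le_compat.
    apply exple. assert (0 <= nu ^ 2 * A) by (apply Rmult_le_pos; [apply pow2_ge_0|lra]). simpl; lra.
    apply RInt_le; auto; try (apply c_exRInt; auto).
    intros s Hs. unfold Einf. apply Rmult_le_compat_l.
    apply Rmult_le_pos; auto; left; apply exp_pos.
    apply exple. assert (Hu := uge s ltac:(lra)).
    assert (0 <= RInt D 0 (s - tau s)).
    { apply RInt_ge_0. lra. apply c_exRInt; auto. intros; left; auto. }
    assert (0 <= RInt D s T).
    { apply RInt_ge_0. lra. apply c_exRInt; auto. intros; left; auto. }
    assert (0 <= nu ^ 2) by apply pow2_ge_0. simpl. nra. }
  assert (K0gt1 : 1 < Kinf 0).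
  { unfold Lval, kM in HL. fold B in HL.
    set (J := RInt (fun s => dRphi tau dI p hp0 s / exp (- RInt dM (s - tau s) s)) ta tb) in HL.
    assert (HJ : exp (- B) * J = RInt (Einf T D dM tau dI p hp0 0) ta tb).
    { unfold J. rewrite <- RInt_scalR.
      2:{ apply c_exRInt. intros x.
          apply (continuous_ext (fun s => dRphi tau dI p hp0 s * exp (RInt dM (s - tau s) s))).
          { intros s. unfold Rdiv. rewrite exp_Ropp, Rinv_inv. reflexivity. }
          apply cmult; auto. apply cexp. apply (cont_RInt_gen dM (fun s => s - tau s) (fun s => s)); auto.
          intros; apply continuous_id. }
      apply RInt_ext. intros s _. unfold Einf.
      rewrite (RInt_prim dM cdM (s - tau s) s), (RInt_prim dM cdM s T).
      fold B. unfold Rdiv. rewrite (exp_Ropp (RInt dM 0 s - RInt dM 0 (s - tau s))), Rinv_inv.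
      replace (0 ^ 2 * (RInt D 0 (s - tau s) + RInt D s T)) with 0 by ring. rewrite exp_0.
      replace (- (RInt dM 0 (s - tau s) + (B - RInt dM 0 s))) with
        (- B + (RInt dM 0 s - RInt dM 0 (s - tau s))) by ring.
      rewrite exp_plus. match goal with |- ?a = ?b => change (@eq R a b) end; ring. }
    unfold Kinf. rewrite <- HJ.
    replace (0 ^ 2 * A - B) with (- B) by ring.
    destruct B0 as [Bp|Bz].
    - assert (exp (- B) < 1). { rewrite <- exp_0. apply exp_increasing. lra. }
      assert (Hm : exp (-B) * J = (exp (- B) / (1 - exp (- B)) * J) * (1 - exp (- B))).
      { field. lra. }
      assert ((exp (- B) / (1 - exp (- B)) * J) * (1 - exp (- B)) > 1 * (1 - exp (-B))).
      { apply Rmult_gt_compat_r; lra. }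
      lra.
    - exfalso. rewrite <- Bz in HL. rewrite Ropp_0, exp_0 in HL.
      unfold Rdiv in HL. rewrite Rminus_diag, Rinv_0 in HL. lra. }
  set (a := ln (Kinf 0)).
  assert (apos : 0 < a). { unfold a. pose proof (ln_increasing 1 (Kinf 0) Rlt_0_1 K0gt1) as Hq; rewrite ln_1 in Hq; exact Hq. }
  set (nu0 := (B + 1) / A + 1).
  assert (nu0ge : 1 <= nu0).
  { unfold nu0. assert (0 < (B + 1) / A) by (apply Rdiv_lt_0_compat; lra). lra. }
  assert (nu0A : nu0 * A = B + 1 + A) by (unfold nu0; field; lra).
  set (cc := Rmin a 1 / nu0).
  assert (ccpos : 0 < cc).
  { unfold cc. apply Rdiv_lt_0_compat; [|lra]. apply Rmin_case; lra. }
  assert (Hlow : forall nu, 0 < nu -> cc <= Hinf T D dM tau dI p hp0 ta tb nu).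
  { intros nu Hnu. rewrite HinfE.
    assert (Kpos : 0 < Kinf nu) by (apply Rlt_le_trans with (Kinf 0); [lra|auto]).
    destruct (Rle_lt_dec nu nu0) as [Hle|Hgt].
    - assert (a <= ln (Kinf nu)) by (apply lnle; [lra|auto]).
      assert (/ nu0 <= / nu) by (apply Rinv_le_contravar; lra).
      assert (Rmin a 1 <= a) by apply Rmin_l.
      assert (0 < / nu0) by (apply Rinv_0_lt_compat; lra).
      assert (0 < / nu) by (apply Rinv_0_lt_compat; lra).
      unfold cc, Rdiv. rewrite Rmult_comm.
      apply Rle_trans with (/ nu * a). 2:{ apply Rmult_le_compat_l; lra. }
      apply Rle_trans with (/ nu0 * a). apply Rmult_le_compat_l; lra.
      apply Rmult_le_compat_r; lra.
    - assert (nu ^ 2 * A - B <= ln (Kinf nu)).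
      { rewrite <- (ln_exp (nu ^ 2 * A - B)). apply lnle. apply exp_pos. auto. }
      assert (nu <= nu ^ 2 * A - B).
      { assert (nu * (nu0 * A) <= nu * (nu * A)).
        { apply Rmult_le_compat_l. lra. apply Rmult_le_compat_r; lra. }
        rewrite nu0A in H0. simpl. nra. }
      assert (cc <= 1).
      { unfold cc. apply Rle_trans with (1 / nu0).
        unfold Rdiv. apply Rmult_le_compat_r. left; apply Rinv_0_lt_compat; lra. apply Rmin_r.
        unfold Rdiv. rewrite Rmult_1_l. rewrite <- Rinv_1. apply Rinv_le_contravar; lra. }
      assert (1 <= / nu * ln (Kinf nu)).
      { replace 1 with (/ nu * nu) by (field; lra).
        apply Rmult_le_compat_l. left; apply Rinv_0_lt_compat; lra. lra. }
      lra. }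
  destruct (glb_fin (fun c => exists mu, 0 < mu /\ c = Hinf T D dM tau dI p hp0 ta tb mu) cc
              (Hinf T D dM tau dI p hp0 ta tb 1)) as [l [Hl [Hcl [Hlb Heps]]]].
  { exists 1; split; auto; lra. }
  { intros x [mu [Hmu ->]]. apply Hlow; auto. }
  assert (Kint_eq : forall k mu, 0 < k ->
    Kint T (fun t => k * D t) dM DI tau dI p hp0 ta tb mu =
    exp ((mu * sqrt k) ^ 2 * A - B) +
    RInt (fun s => Einf T D dM tau dI p hp0 (mu * sqrt k) s * exp (mu ^ 2 * Defs.sigma DI tau s)) ta tb).
  { intros k mu Hk.
    assert (Hsq : (mu * sqrt k) ^ 2 = mu ^ 2 * k).
    { rewrite Rpow_mult_distr, pow2_sqrt; lra. }
    assert (RIntg : forall a b, RInt (fun v => mu ^ 2 * (k * D v) - dM v) a b =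
                               (mu * sqrt k) ^ 2 * RInt D a b - RInt dM a b).
    { intros a0 b0. rewrite Hsq. rewrite <- RInt_lin; auto. apply RInt_ext. intros; match goal with |- ?a = ?b => change (@eq R a b) end; ring. }
    unfold Kint. cbv zeta. f_equal.
    - rewrite RIntg. reflexivity.
    - apply RInt_ext. intros s _. rewrite !RIntg. unfold Einf.
      match goal with |- ?a = ?b => change (@eq R a b) end.
      rewrite !Rmult_assoc. f_equal. rewrite <- !exp_plus. f_equal. ring. }
  assert (Kbounds : forall k mu, 0 < k -> 0 < mu ->
    Kinf (mu * sqrt k) <= Kint T (fun t => k * D t) dM DI tau dI p hp0 ta tb mu <=
    exp (mu ^ 2 * S) * Kinf (mu * sqrt k)).
  { intros k mu Hk Hmu. rewrite Kint_eq by auto. unfold Kinf.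
    destruct (int_bounds (Einf T D dM tau dI p hp0 (mu * sqrt k)) (Defs.sigma DI tau) ta tb (mu ^ 2) S)
      as [Hb1 Hb2]; auto; try (intros x Hx; split; auto; apply HMx; auto); try apply pow2_ge_0.
    assert (1 <= exp (mu ^ 2 * S)).
    { rewrite <- exp_0. apply exple. apply Rmult_le_pos; auto. apply pow2_ge_0. }
    assert (0 < exp ((mu * sqrt k) ^ 2 * A - B)) by apply exp_pos.
    split. lra. nra. }
  assert (Hcstar : forall k, 0 < k -> exists ck,
    cstar T (fun t => k * D t) dM DI tau dI p hp0 ta tb = Finite ck /\
    sqrt k * l <= ck /\
    forall nu, 0 < nu -> ck <= sqrt k * (Hinf T D dM tau dI p hp0 ta tb nu + nu * S / k)).
  { intros k Hk. assert (Hsk : 0 < sqrt k) by (apply sqrt_lt_R0; auto).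
    assert (Hel : forall mu, 0 < mu -> sqrt k * l <= / mu * ln (Kint T (fun t => k * D t) dM DI tau dI p hp0 ta tb mu)).
    { intros mu Hmu. set (nu := mu * sqrt k).
      assert (Hnu : 0 < nu) by (unfold nu; nra).
      destruct (Kbounds k mu Hk Hmu) as [Kb1 _]. fold nu in Kb1.
      assert (Kpos : 0 < Kinf nu) by (apply Rlt_le_trans with (Kinf 0); [lra|auto]).
      assert (Hh1 : l <= / nu * ln (Kinf nu)).
      { rewrite <- HinfE. apply Hlb. exists nu; split; auto. }
      assert (Hh2 : nu * l <= ln (Kinf nu)).
      { replace (ln (Kinf nu)) with (nu * (/ nu * ln (Kinf nu))) by (field; lra).
        apply Rmult_le_compat_l; lra. }
      assert (Hh3 : ln (Kinf nu) <= ln (Kint T (fun t => k * D t) dM DI tau dI p hp0 ta tb mu)).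
      { apply lnle; auto. }
      replace (sqrt k * l) with (/ mu * (nu * l)) by (unfold nu; field; lra).
      apply Rmult_le_compat_l. left; apply Rinv_0_lt_compat; lra. lra. }
    destruct (glb_fin (fun c => exists mu, 0 < mu /\ c = / mu * ln (Kint T (fun t => k * D t) dM DI tau dI p hp0 ta tb mu))
                (sqrt k * l) (/ 1 * ln (Kint T (fun t => k * D t) dM DI tau dI p hp0 ta tb 1)))
      as [ck [Hck [Hck1 [Hck2 _]]]].
    { exists 1; split; auto; lra. }
    { intros x [mu [Hmu ->]]. apply Hel; auto. }
    exists ck. split. exact Hck. split. exact Hck1.
    intros nu Hnu. set (mu := nu / sqrt k).
    assert (Hmu : 0 < mu) by (unfold mu; apply Rdiv_lt_0_compat; auto).
    assert (Hmunu : mu * sqrt k = nu) by (unfold mu; field; lra).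
    destruct (Kbounds k mu Hk Hmu) as [Kb1 Kb2]. rewrite Hmunu in Kb1, Kb2.
    assert (Kpos : 0 < Kinf nu) by (apply Rlt_le_trans with (Kinf 0); [lra|auto]).
    assert (Hl1 : ln (Kint T (fun t => k * D t) dM DI tau dI p hp0 ta tb mu) <= mu ^ 2 * S + ln (Kinf nu)).
    { rewrite <- (ln_exp (mu ^ 2 * S)), <- ln_mult; try apply exp_pos; auto.
      apply lnle; auto. apply Rlt_le_trans with (Kinf nu); auto. }
    apply Rle_trans with (/ mu * ln (Kint T (fun t => k * D t) dM DI tau dI p hp0 ta tb mu)).
    { apply Hck2. exists mu; split; auto. }
    apply Rle_trans with (/ mu * (mu ^ 2 * S + ln (Kinf nu))).
    { apply Rmult_le_compat_l; auto. left; apply Rinv_0_lt_compat; auto. }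
    rewrite HinfE.
    assert (Hkk : sqrt k * sqrt k = k) by (apply sqrt_sqrt; lra).
    right. unfold mu. replace (nu * S / k) with (nu * S / (sqrt k * sqrt k)) by (rewrite Hkk; reflexivity). field. split; lra. }
  exists l. split. lra. split. unfold Hinf_inf. exact Hl. split.
  { exists 0. intros k Hk. destruct (Hcstar k Hk) as [ck [Hc _]]. rewrite Hc. reflexivity. }
  apply is_lim_spec. intros eps. simpl.
  assert (He2 : 0 < eps / 2) by (destruct eps; simpl; lra).
  destruct (Heps (eps / 2) He2) as [x [[nu [Hnu ->]] Hx]].
  exists (Rmax 1 (2 * nu * S / eps)). intros k Hk.
  assert (Hk1 : 1 < k) by (eapply Rle_lt_trans; [apply Rmax_l|exact Hk]).
  assert (Hk2 : 2 * nu * S / eps < k) by (eapply Rle_lt_trans; [apply Rmax_r|exact Hk]).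
  assert (Hk0 : 0 < k) by lra.
  destruct (Hcstar k Hk0) as [ck [Hc [Hlo Hup]]]. rewrite Hc. simpl.
  assert (Hsk : 0 < sqrt k) by (apply sqrt_lt_R0; auto).
  assert (Hepsp := cond_pos eps).
  set (q := ck / sqrt k).
  assert (Hq : ck = sqrt k * q) by (unfold q; field; lra).
  specialize (Hup nu Hnu). rewrite Hq in Hlo, Hup.
  apply Rmult_le_reg_l in Hlo; auto. apply Rmult_le_reg_l in Hup; auto.
  assert (Hsm : nu * S / k < eps / 2).
  { apply (Rmult_lt_reg_r k); [lra|].
    replace (nu * S / k * k) with (nu * S) by (field; lra).
    assert (2 * nu * S / eps * eps < k * eps) by (apply Rmult_lt_compat_r; auto).
    replace (2 * nu * S / eps * eps) with (2 * nu * S) in H by (field; lra).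
    lra. }
  apply Rabs_def1; lra.
Qed.
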